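(* Let $\omega(a,\beta)$ be any function with $W^{(n)}(a,\beta)\le\omega(a,\beta)$ whenever $W^{(n)}(a,\beta)$ is defined. Then for $a,\rho\in(0,1)$ with $2^na\in\mathbb Z$, $\mathbf{MaxStab}_\Phi(a)\le\Upsilon_\rho(a)$, where $$\Upsilon_\rho(a):=\sup_{\beta,P_{Z|SX}}\mathbb E[\Phi(a+\rho Z)]$$ subject to $0\le\beta\le\min\{a,1-a\}$, $0\le a+\rho Z\le1$ a.s., $\mathbb EZ=0$, $\mathbb E[XZ]=\beta$, $\mathbb E[Z^2]\le(1-\rho)\omega(a,\beta)+\rho\mathbb E[SZ]$, where $(S,X,Z)\sim P_{SX}P_{Z|SX}$ with $P_{SX}(-a,-1)=\frac{1-a+\beta}2$, $P_{SX}(-a,1)=\frac{1-a-\beta}2$, $P_{SX}(1-a,-1)=\frac{a-\beta}2$, $P_{SX}(1-a,1)=\frac{a+\beta}2$, and the supremum is over $\beta$ and conditional probability mass functions $P_{Z|SX}$ of a real random variable $Z$.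
   Context: $\mathbf X$ uniform on $\{-1,1\}^n$; $\mathbf Y$ obtained by independently flipping each coordinate of $\mathbf X$ with probability $(1-\rho)/2$; $T_\rho f(\mathbf x)=\mathbb E[f(\mathbf Y)\mid\mathbf X=\mathbf x]$; $\Phi:[0,1]\to\mathbb R$ continuous and strictly convex; $\mathbf{MaxStab}_\Phi(a)=\max\{\mathbb E[\Phi(T_\rho f(\mathbf X))]:f:\{-1,1\}^n\to\{0,1\},\mathbb Ef(\mathbf X)=a\}$. For $f:\{-1,1\}^n\to\mathbb R$, $\hat f_{\{i\}}=\mathbb E[f(\mathbf X)X_i]$, $\mathbf W_1[f]=\sum_i\hat f_{\{i\}}^2$, and $W^{(n)}(a,\beta):=\max\{\mathbf W_1[f]:f\text{ Boolean},\ \mathbb Ef=a,\ \max_{i}|\hat f_{\{i\}}|=\beta\}$. *)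

(* Defs.v *)
From HB Require Import structures.
From mathcomp Require Import all_boot all_order all_algebra.
From mathcomp Require Import all_classical all_reals all_analysis.
Set Implicit Arguments. Unset Strict Implicit. Unset Printing Implicit Defensive.
Import Order.TTheory GRing.Theory Num.Theory numFieldNormedType.Exports.
Local Open Scope classical_set_scope.
Local Open Scope ring_scope.

Section Defs.
Variable R : realType.

(* The cube {-1,1}^n: a point is a finite function 'I_n -> bool,
   coordinate value  spm b = 1 if b, -1 otherwise. *)
Definition cube (n : nat) := {ffun 'I_n -> bool}.
Definition spm (b : bool) : R := if b then 1 else -1.

Definition Eunif (n : nat) (g : cube n -> R) : R :=
  (2%:R ^+ n)^-1 * \sum_(x : cube n) g x.

(* Boolean function f : {-1,1}^n -> {0,1}, encoded as cube n -> bool,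
   with real value 1 for true and 0 for false. *)
Definition b01 (b : bool) : R := if b then 1 else 0.

Definition noise_kernel (n : nat) (rho : R) (x y : cube n) : R :=
  \prod_(i < n) (if x i == y i then (1 + rho) / 2 else (1 - rho) / 2).

Definition Trho (n : nat) (rho : R) (f : cube n -> R) (x : cube n) : R :=
  \sum_(y : cube n) noise_kernel rho x y * f y.

Definition fhat1 (n : nat) (f : cube n -> R) (i : 'I_n) : R :=
  Eunif (fun x => f x * spm (x i)).
Definition W1 (n : nat) (f : cube n -> R) : R := \sum_(i < n) fhat1 f i ^+ 2.
Definition maxabs_hat (n : nat) (f : cube n -> R) : R :=
  \big[Num.max/0]_(i < n) `|fhat1 f i|.

Definition boolR (n : nat) (f : cube n -> bool) : cube n -> R := fun x => b01 (f x).

Definition Wfeas (n : nat) (a beta : R) (f : cube n -> bool) : bool :=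
  (Eunif (boolR f) == a) && (maxabs_hat (boolR f) == beta).

Definition W_defined (n : nat) (a beta : R) : Prop :=
  exists f : {ffun cube n -> bool}, Wfeas a beta f.

(* W^(n)(a,beta): maximum of W1 over the (finite) constraint set; since W1 >= 0
   the default 0 is harmless when the set is nonempty. *)
Definition Wn (n : nat) (a beta : R) : R :=
  \big[Num.max/0]_(f : {ffun cube n -> bool} | Wfeas a beta f) W1 (boolR f).

(* MaxStab_Phi(a), as an extended real (max of a finite set, -oo if empty). *)
Definition MaxStab (n : nat) (rho : R) (Phi : R -> R) (a : R) : \bar R :=
  \big[Order.max/-oo%E]_(f : {ffun cube n -> bool} | Eunif (boolR f) == a)
     (Eunif (fun x => Phi (Trho rho (boolR f) x)))%:E.

(* The four-point law P_{SX}: index sx = (bs, bx), with S = 1-a if bs else -a,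
   X = 1 if bx else -1. *)
Definition Sval (a : R) (sx : bool * bool) : R := if sx.1 then 1 - a else - a.
Definition Xval (sx : bool * bool) : R := spm sx.2.
Definition PSX (a beta : R) (sx : bool * bool) : R :=
  match sx with
  | (false, false) => (1 - a + beta) / 2
  | (false, true)  => (1 - a - beta) / 2
  | (true, false)  => (a - beta) / 2
  | (true, true)   => (a + beta) / 2
  end.

(* A conditional pmf P_{Z|SX} is given, for each of the four (s,x), by a
   countable family of atoms z sx k with masses p sx k (k : nat). *)
Definition is_cond_pmf (p : bool * bool -> nat -> R) : Prop :=
  forall sx, (forall k, 0 <= p sx k) /\ (series (p sx) @ \oo --> (1 : R)).

Definition Ejoint (a beta : R) (z p : bool * bool -> nat -> R)
    (g : R -> R -> R -> R) : R :=
  \sum_(sx : bool * bool)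
     PSX a beta sx * limn (series (fun k => p sx k * g (Sval a sx) (Xval sx) (z sx k))).

Definition Ufeas (rho : R) (omega : R -> R -> R) (a beta : R)
    (z p : bool * bool -> nat -> R) : Prop :=
  [/\ 0 <= beta <= Num.min a (1 - a),
      is_cond_pmf p &
     [/\
      (* 0 <= a + rho Z <= 1 almost surely *)
      (forall sx k, 0 < PSX a beta sx * p sx k ->
          0 <= a + rho * z sx k <= 1),
      Ejoint a beta z p (fun _ _ zz => zz) = 0,
      Ejoint a beta z p (fun _ x zz => x * zz) = beta &
      Ejoint a beta z p (fun _ _ zz => zz ^+ 2)
        <= (1 - rho) * omega a beta + rho * Ejoint a beta z p (fun s _ zz => s * zz)]].

Definition Upsilon (rho : R) (Phi : R -> R) (omega : R -> R -> R) (a : R) : \bar R :=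
  ereal_sup [set r : \bar R | exists beta (z p : bool * bool -> nat -> R),
     Ufeas rho omega a beta z p /\
     r = (Ejoint a beta z p (fun _ _ zz => Phi (a + rho * zz)))%:E].

End Defs.

(* Main.v *)
Require Import Defs.
From HB Require Import structures.
From mathcomp Require Import all_boot all_order all_algebra.
From mathcomp Require Import all_classical all_reals all_analysis.
From mathcomp Require Import ring lra.
Import Order.TTheory GRing.Theory Num.Theory numFieldNormedType.Exports.
Local Open Scope classical_set_scope.
Local Open Scope ring_scope.

Section Four.
Variable R : realType.
Variable n : nat.

Definition kc (r : R) (b c : bool) : R := if b == c then (1 + r) / 2 else (1 - r) / 2.
Definition chi (s x : cube n) : R := \prod_i (if s i then spm R (x i) else 1).
Definition wgt (r : R) (s : cube n) : R := \prod_i (if s i then r else 1).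
Definition hat (h : cube n -> R) (s : cube n) : R := Eunif (fun x => h x * chi s x).
Definition c0 : R := (2%:R ^+ n)^-1.

Lemma prod_sum (F : 'I_n -> bool -> R) :
  \sum_(x : cube n) \prod_i F i (x i) = \prod_i \sum_b F i b.
Proof. by rewrite bigA_distr_bigA. Qed.

Lemma kc_spec r b c : kc r b c = 2^-1 * \sum_(e : bool) (if e then r * spm R b * spm R c else 1).
Proof. rewrite big_bool /kc /spm; case: b; case: c => /=; by field. Qed.

Lemma kernel_spec r x y : noise_kernel r x y = c0 * \sum_s wgt r s * chi s x * chi s y.
Proof.
rewrite /noise_kernel.
have -> : \prod_(i < n) (if x i == y i then (1 + r) / 2 else (1 - r) / 2)
   = \prod_(i < n) (2^-1 * \sum_(e : bool) (if e then r * spm R (x i) * spm R (y i) else 1)).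
  by apply: eq_bigr => i _; rewrite -kc_spec.
rewrite big_split /= prodr_const card_ord exprVn -(prod_sum (fun i e => if e then r * spm R (x i) * spm R (y i) else 1)) /c0; congr (_ * _).
apply: eq_bigr => s _; rewrite /wgt /chi -!big_split /=; apply: eq_bigr => i _.
by case: (s i); rewrite ?mulr1.
Qed.

Lemma sum_one : \sum_(x : cube n) (1 : R) = 2%:R ^+ n.
Proof.
have -> : \sum_(x : cube n) (1 : R) = \sum_(x : cube n) \prod_(i < n) (fun _ _ => (1:R)) i (x i).
  by apply: eq_bigr => x _; rewrite big1.
by rewrite (prod_sum (fun _ _ => 1)) big_bool prodr_const card_ord.
Qed.

Lemma c0_neq0 : c0 != 0.
Proof. by rewrite /c0 invr_eq0 expf_neq0 // pnatr_eq0. Qed.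

Lemma c0_gt0 : 0 < c0.
Proof. by rewrite /c0 invr_gt0 exprn_gt0 // ltr0n. Qed.

Lemma c0K : c0 * 2%:R ^+ n = 1.
Proof. by rewrite /c0 mulVf // expf_neq0 // pnatr_eq0. Qed.

Lemma c0K' : 2%:R ^+ n * c0 = 1.
Proof. by rewrite mulrC c0K. Qed.

Lemma Eunif_T r h g :
  Eunif (fun x => h x * Trho r g x) = \sum_s wgt r s * hat h s * hat g s.
Proof.
rewrite /Eunif /Trho /hat /Eunif -/c0.
pose G s x y := c0 * c0 * wgt r s * (h x * chi s x) * (g y * chi s y).
transitivity (\sum_x \sum_y \sum_s G s x y).
  rewrite mulr_sumr; apply: eq_bigr => x _; rewrite mulr_sumr mulr_sumr.
  apply: eq_bigr => y _; rewrite kernel_spec mulr_sumr big_distrl /= mulr_sumr mulr_sumr.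
  by apply: eq_bigr => s _; rewrite /G; ring.
transitivity (\sum_s \sum_x \sum_y G s x y).
  transitivity (\sum_x \sum_s \sum_y G s x y).
    by apply: eq_bigr => x _; exact: exchange_big.
  exact: exchange_big.
apply: eq_bigr => s _; rewrite !mulr_sumr.
under [RHS]eq_bigr do rewrite mulr_suml.
rewrite [RHS]exchange_big; apply: eq_bigr => x _; apply: eq_bigr => y _.
by rewrite /G; ring.
Qed.


Lemma T_prod r y (H : 'I_n -> bool -> R) :
  Trho r (fun x => \prod_j H j (x j)) y = \prod_j \sum_b kc r (y j) b * H j b.
Proof.
rewrite /Trho /noise_kernel /=.
transitivity (\sum_(x : cube n) \prod_j (kc r (y j) (x j) * H j (x j))).
  by apply: eq_bigr => x _; rewrite big_split.
exact: (prod_sum (fun j b => kc r (y j) b * H j b)).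
Qed.

Lemma T_chi r s y : Trho r (chi s) y = wgt r s * chi s y.
Proof.
rewrite /chi (T_prod r y (fun j b => if s j then spm R b else 1)) /wgt -big_split.
apply: eq_bigr => j _ /=; rewrite big_bool /kc /spm.
by case: (s j); case: (y j) => /=; field.
Qed.

Lemma T_one (r : R) (y : cube n) : \sum_(x : cube n) noise_kernel r y x = 1.
Proof.
transitivity (Trho r (fun x => \prod_(j < n) (fun _ _ => (1:R)) j (x j)) y).
  by rewrite /Trho; apply: eq_bigr => x _; rewrite big1 ?mulr1.
rewrite (T_prod r y (fun _ _ => 1)) big1 // => j _; rewrite big_bool /kc.
by case: (y j) => /=; field.
Qed.

Lemma Trho_lin (r : R) (F : cube n -> R) (c : R) (y : cube n) : Trho r (fun x => F x - c) y = Trho r F y - c.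
Proof.
rewrite /Trho; under eq_bigr do rewrite mulrBr.
by rewrite sumrB -mulr_suml T_one mul1r.
Qed.

Lemma Eunif_sym (r : R) (h g : cube n -> R) :
  Eunif (fun x => h x * Trho r g x) = Eunif (fun x => g x * Trho r h x).
Proof. by rewrite !Eunif_T; apply: eq_bigr => s _; ring. Qed.

Lemma kk (r : R) (y z : cube n) : \sum_(x : cube n) noise_kernel r x y * noise_kernel r x z = noise_kernel (r ^+ 2) y z.
Proof.
rewrite /noise_kernel.
transitivity (\sum_(x : cube n) \prod_i ((if x i == y i then (1 + r) / 2 else (1 - r) / 2) *
                              (if x i == z i then (1 + r) / 2 else (1 - r) / 2))).
  by apply: eq_bigr => x _; rewrite big_split.
rewrite (prod_sum (fun i b => (if b == y i then (1 + r) / 2 else (1 - r) / 2) *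
                              (if b == z i then (1 + r) / 2 else (1 - r) / 2))).
apply: eq_bigr => i _; rewrite big_bool.
by case: (y i); case: (z i) => /=; field.
Qed.

Lemma T_sq (r : R) (g : cube n -> R) :
  Eunif (fun x => Trho r g x ^+ 2) = Eunif (fun x => g x * Trho (r ^+ 2) g x).
Proof.
rewrite /Eunif /Trho; congr (_ * _).
transitivity (\sum_x \sum_y \sum_z noise_kernel r x y * noise_kernel r x z * g y * g z).
  apply: eq_bigr => x _; rewrite expr2 mulr_suml; apply: eq_bigr => y _.
  by rewrite mulr_sumr; apply: eq_bigr => z _; ring.
rewrite exchange_big; apply: eq_bigr => y _; rewrite exchange_big mulr_sumr.
apply: eq_bigr => z _; rewrite -kk mulr_suml mulr_sumr; apply: eq_bigr => x _; ring.
Qed.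

Definition ei (i : 'I_n) : cube n := [ffun j => j == i].
Definition s0 : cube n := [ffun _ => false].

Lemma chi_ei i x : chi (ei i) x = spm R (x i).
Proof.
rewrite /chi (bigD1 i) //= ffunE eqxx big1 ?mulr1 // => j /negbTE ji.
by rewrite ffunE ji.
Qed.

Lemma wgt_ei r i : wgt r (ei i) = r.
Proof.
rewrite /wgt (bigD1 i) //= ffunE eqxx big1 ?mulr1 // => j /negbTE ji.
by rewrite ffunE ji.
Qed.

Lemma chi_s0 x : chi s0 x = 1.
Proof. by rewrite /chi big1 // => j _; rewrite ffunE. Qed.

Lemma sum_spm i : \sum_(x : cube n) spm R (x i) = 0.
Proof.
transitivity (\sum_(x : cube n) chi (ei i) x).
  by apply: eq_bigr => x _; rewrite chi_ei.
rewrite /chi (prod_sum (fun j b => if ei i j then spm R b else 1)) (bigD1 i) //=.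
by rewrite ffunE eqxx big_bool /spm /= subrr mul0r.
Qed.

Lemma key (rho : R) (g : cube n -> R) : 0 < rho < 1 -> hat g s0 = 0 ->
  Eunif (fun x => Trho rho g x ^+ 2) / rho ^+ 2 <=
  (1 - rho) * \sum_i hat g (ei i) ^+ 2 + Eunif (fun x => g x * Trho rho g x).
Proof.
move=> /andP[r0 r1] hg0.
rewrite T_sq !Eunif_T.
have Wsum : \sum_i hat g (ei i) ^+ 2 =
    \sum_s (\sum_i (s == ei i)%:R) * hat g s ^+ 2.
  under [RHS]eq_bigr do rewrite mulr_suml.
  rewrite [RHS]exchange_big; apply: eq_bigr => i _.
  rewrite (bigD1 (ei i)) //= eqxx mul1r big1 ?addr0 // => s /negbTE ->.
  by rewrite mul0r.
rewrite Wsum mulr_suml mulr_sumr -big_split /=; apply: ler_sum => s _.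
have w2 : wgt (rho ^+ 2) s = wgt rho s ^+ 2.
  by rewrite /wgt -prodrXl; apply: eq_bigr => i _; case: (s i); rewrite ?expr1n.
rewrite w2.
have m0 : 0 <= \sum_i (s == ei i)%:R :> R by apply: sumr_ge0 => i _; rewrite ler0n.
have w0 : 0 <= wgt rho s.
  by rewrite /wgt; apply: prodr_ge0 => i _; case: (s i) => //; rewrite ltW.
have rr : 0 < rho ^+ 2 by rewrite exprn_gt0.
rewrite ler_pdivrMr //.
set m := \sum_i _ in m0 *.
set w := wgt rho s in w0 *.
set h := hat g s.
have h2 : 0 <= h * h by rewrite -expr2 sqr_ge0.
case: (boolP [exists i, s i]) => [/existsP[i si]|/existsPn E0]; last first.
  have Es : s = s0 by apply/ffunP => i; rewrite ffunE; apply/negbTE; exact: E0.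
  have -> : h = 0 by rewrite /h Es hg0.
  by rewrite !(mulr0, mul0r, addr0, expr2).
case: (boolP [exists j, (j != i) && s j]) => [/existsP[j /andP[ji sj]]|/existsPn E1].
  have wle : w <= rho ^+ 2.
    rewrite /w /wgt (bigD1 i) //= si (bigD1 j) /=; last by rewrite ji.
    rewrite sj mulrA -expr2; apply: ler_piMr; first exact: ltW.
    apply: prodr_ile1 => k _; case: (s k); first by rewrite (ltW r0) (ltW r1).
    by rewrite ler01 lexx.
  have A : 0 <= h * h * w by rewrite mulr_ge0.
  have B : 0 <= (1 - rho) * (m * h ^+ 2) * rho ^+ 2.
    apply: mulr_ge0; last exact: ltW.
    apply: mulr_ge0; first by rewrite subr_ge0 ltW.
    by apply: mulr_ge0 => //; exact: sqr_ge0.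
  apply: (le_trans (y := h * h * w * rho ^+ 2)).
    have -> : w ^+ 2 * h * h = h * h * w * w by ring.
    by rewrite ler_wpM2l.
  have -> : ((1 - rho) * (m * h ^+ 2) + w * h * h) * rho ^+ 2 =
     (1 - rho) * (m * h ^+ 2) * rho ^+ 2 + h * h * w * rho ^+ 2 by ring.
  by rewrite lerDr.
have Es : s = ei i.
  apply/ffunP => j; rewrite ffunE; case: (eqVneq j i) => [->|jne] //.
  by apply/negbTE; have := E1 j; rewrite jne.
have m1 : 1 <= m.
  rewrite /m (bigD1 i) //= Es eqxx lerDl; apply: sumr_ge0 => k _; rewrite ler0n //.
have -> : w = rho by rewrite /w Es wgt_ei.
have P : 0 <= (m - 1) * (h * h) by rewrite mulr_ge0 // subr_ge0.
rewrite -subr_ge0.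
have -> : ((1 - rho) * (m * h ^+ 2) + rho * h * h) * rho ^+ 2 - rho ^+ 2 * h * h
   = rho ^+ 2 * (1 - rho) * ((m - 1) * (h * h)) by ring.
apply: mulr_ge0 => //; apply: mulr_ge0; first exact: ltW.
by rewrite subr_ge0 ltW.
Qed.

End Four.


Section Enc.
Variable R : realType.
Variable n : nat.

Definition xk (k : nat) : cube n := nth (s0 n) (enum (cube n)) k.
Definition NN := size (enum (cube n)).
Definition cnt (c : cube n -> bool * bool) sx := #|[pred x | c x == sx]|.
Definition pp (c : cube n -> bool * bool) sx (k : nat) : R :=
  if cnt c sx == 0%N then (k == 0%N)%:R
  else if (k < NN)%N then (c (xk k) == sx)%:R / (cnt c sx)%:R else 0.
Definition zz (Zf : cube n -> R) (sx : bool * bool) (k : nat) := Zf (xk k).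

Lemma series_fin (u : nat -> R) N : (forall k, (N <= k)%N -> u k = 0) ->
  series u @ \oo --> \sum_(k < N) u k.
Proof.
move=> uz; apply: cvg_near_cst; near=> m.
have Nm : (N <= m)%N by near: m; exact: nbhs_infty_ge.
rewrite /series /= (@big_cat_nat _ _ _ N 0 m) //= big_mkord.
by rewrite [X in _ + X]big1_seq ?addr0 // => k /andP[_]; rewrite mem_index_iota => /andP[/uz].
Unshelve. all: by end_near.
Qed.

Lemma limn_fin (u : nat -> R) N : (forall k, (N <= k)%N -> u k = 0) ->
  limn (series u) = \sum_(k < N) u k.
Proof. by move=> uz; apply: cvg_lim => //; exact: series_fin. Qed.

Lemma sum_xk (F : cube n -> R) : \sum_(k < NN) F (xk k) = \sum_x F x.
Proof.
rewrite /xk -(big_mkord xpredT (fun k => F (nth (s0 n) (enum (cube n)) k))).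
by rewrite -(big_nth (s0 n) xpredT F) big_enum.
Qed.

Lemma sum_ind (c : cube n -> bool * bool) sx :
  \sum_x ((c x == sx)%:R : R) = (cnt c sx)%:R.
Proof.
rewrite /cnt -sumr_const [RHS]big_mkcond /=; apply: eq_bigr => x _.
by rewrite inE; case: (c x == sx).
Qed.


Lemma pmf_fin (c : cube n -> bool * bool) : is_cond_pmf (pp c).
Proof.
move=> sx; split.
  move=> k; rewrite /pp; case: ifP => _; first by rewrite ler0n.
  by case: ifP => _ //; rewrite divr_ge0 // ler0n.
case: (eqVneq (cnt c sx) 0%N) => C.
  have := @series_fin (pp c sx) 1%N.
  rewrite big_ord1 /pp C eqxx /=; apply => k.
  by case: k.
have -> : (1 : R) = \sum_(k < NN) pp c sx k.
  rewrite /pp (negbTE C).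
  have -> : \sum_(k < NN) (if (k < NN)%N then (c (xk k) == sx)%:R / (cnt c sx)%:R else 0)
      = \sum_(k < NN) (c (xk k) == sx)%:R / (cnt c sx)%:R :> R.
    by apply: eq_bigr => k _; rewrite ltn_ord.
  rewrite -mulr_suml (sum_xk (fun x => (c x == sx)%:R)) sum_ind mulfV //.
  by rewrite pnatr_eq0.
apply: series_fin => k kN; rewrite /pp (negbTE C).
by rewrite ltnNge kN.
Qed.

Lemma Ejoint_fin (a beta : R) (c : cube n -> bool * bool) (Sf Xf Zf : cube n -> R)
  (G : R -> R -> R -> R) :
  (forall sx, PSX a beta sx * 2%:R ^+ n = (cnt c sx)%:R) ->
  (forall x, Sval a (c x) = Sf x) -> (forall x, Xval R (c x) = Xf x) ->
  Ejoint a beta (zz Zf) (pp c) G = Eunif (fun x => G (Sf x) (Xf x) (Zf x)).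
Proof.
move=> HP HS HX.
rewrite /Ejoint /Eunif -/(c0 R n) (partition_big c xpredT) //= mulr_sumr.
apply: eq_bigr => sx _.
have PE : PSX a beta sx = (cnt c sx)%:R * c0 R n.
  by rewrite -HP -mulrA c0K' mulr1.
rewrite PE.
case: (eqVneq (cnt c sx) 0%N) => C.
  rewrite C !mul0r big1 ?mulr0 // => x /eqP cx.
  have := card0_eq C x; rewrite inE cx eqxx //.
rewrite (@limn_fin _ NN); last first.
  by move=> k kN; rewrite /pp (negbTE C) ltnNge kN /= mul0r.
rewrite /pp (negbTE C).
have -> : \sum_(k < NN) ((if (k < NN)%N then (c (xk k) == sx)%:R / (cnt c sx)%:R else 0) *
      G (Sval a sx) (Xval R sx) (zz Zf sx k))
   = \sum_(k < NN) (fun x => (c x == sx)%:R / (cnt c sx)%:R * G (Sval a sx) (Xval R sx) (Zf x)) (xk k).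
  by apply: eq_bigr => k _; rewrite ltn_ord.
rewrite (sum_xk (fun x => (c x == sx)%:R / (cnt c sx)%:R * G (Sval a sx) (Xval R sx) (Zf x))) !mulr_sumr [RHS]big_mkcond /=; apply: eq_bigr => x _.
case: (eqVneq (c x) sx) => [cxs|cx] /=.
  have := HS x; have := HX x; rewrite cxs => -> ->.
  by field; rewrite pnatr_eq0.
by rewrite !(mul0r, mulr0).
Qed.

End Enc.


Section Main.
Variable R : realType.
Variable n : nat.

Lemma EunifZ (k : R) (h : cube n -> R) : Eunif (fun x => k * h x) = k * Eunif h.
Proof. by rewrite /Eunif -mulr_sumr; ring. Qed.

Lemma Eunif_ext (h k : cube n -> R) : (forall x, h x = k x) -> Eunif h = Eunif k.
Proof. by move=> hk; rewrite /Eunif; congr (_ * _); apply: eq_bigr => x _. Qed.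

Lemma sum_const (a : R) : \sum_(x : cube n) a = a * 2%:R ^+ n.
Proof. by rewrite -(sum_one R n) mulr_sumr; apply: eq_bigr => x _; rewrite mulr1. Qed.

Lemma EunifB (h : cube n -> R) (c : R) : Eunif (fun x => h x - c) = Eunif h - c.
Proof.
rewrite /Eunif sumrB sum_const mulrBr -/(c0 R n); congr (_ - _).
by rewrite mulrCA c0K mulr1.
Qed.

Lemma T_01 (r : R) (F : cube n -> R) y : -1 <= r <= 1 -> (forall x, 0 <= F x <= 1) ->
  0 <= Trho r F y <= 1.
Proof.
move=> /andP[r0 r1] F01.
have K0 : forall x, 0 <= noise_kernel r y x.
  move=> x; apply: prodr_ge0 => i _; case: ifP => _; apply: divr_ge0 => //.
    by rewrite -lerBlDl sub0r.
  by rewrite subr_ge0.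
apply/andP; split.
  by apply: sumr_ge0 => x _; apply: mulr_ge0 => //; case/andP: (F01 x).
rewrite -(T_one R n r y); apply: ler_sum => x _.
by rewrite -[X in _ <= X]mulr1 ler_wpM2l //; case/andP: (F01 x).
Qed.

Lemma sum_lin4 (al be ga de : R) (u v : cube n -> R) :
  \sum_(x : cube n) (al * 1 + be * u x + ga * v x + de * (u x * v x)) =
  al * \sum_(x : cube n) (1 : R) + be * \sum_x u x + ga * \sum_x v x + de * \sum_x (u x * v x).
Proof. by rewrite !big_split /= -!mulr_sumr. Qed.

End Main.

Lemma cube0_sum (R : realType) (F : cube 0 -> R) : \sum_(x : cube 0) F x = F (s0 0).
Proof.
transitivity (\sum_(x : cube 0) F (s0 0)).
  by apply: eq_bigr => x _; congr F; apply/ffunP => -[].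
by rewrite sum_const expr0 mulr1.
Qed.




Arguments hat {R n}. Arguments chi {R n}. Arguments ei {n}. Arguments wgt {R n}.
Arguments zz {R n}. Arguments pp {R n}. Arguments cnt {n}. Arguments xk {n}.

Lemma n_pos (R : realType) n (f : cube n -> bool) (a : R) :
  Eunif (boolR R f) = a -> 0 < a < 1 -> (0 < n)%N.
Proof.
case: n f => // f; rewrite /Eunif cube0_sum expr0 invr1 mul1r => <-.
by rewrite /boolR /b01; case: (f (s0 0)); rewrite ltxx ?andbF.
Qed.

Theorem theorem3p4 (R : realType) (n : nat) (Phi : R -> R)
  (omega : R -> R -> R) (a rho : R) :
  {within `[0, 1], continuous Phi} ->
  (forall x y t : R, 0 <= x <= 1 -> 0 <= y <= 1 -> x != y -> 0 < t < 1 ->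
     Phi (t * x + (1 - t) * y) < t * Phi x + (1 - t) * Phi y) ->
  (forall a' beta : R, W_defined n a' beta -> Wn n a' beta <= omega a' beta) ->
  0 < a < 1 -> 0 < rho < 1 ->
  (exists k : int, 2%:R ^+ n * a = k%:~R) ->
  (MaxStab n rho Phi a <= Upsilon rho Phi omega a)%E.
Proof.
move=> _ _ Hom a01 r01 _.
have /andP[r0 r1] := r01.
rewrite /MaxStab; apply: bigmax_le => [|f /eqP Ef]; first exact: leNye.
have n0 := @n_pos R n f a Ef a01.
set F := boolR R f in Ef *.
have F01 : forall x, 0 <= F x <= 1.
  by move=> x; rewrite /F /boolR /b01; case: (f x); rewrite ?ler01 ?lexx.
have [i _ Hb] : {i | i \in xpredT & maxabs_hat F = `|fhat1 F i|}.
  by apply: (eq_bigmax (Ordinal n0)) => // j _; exact: normr_ge0.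
set beta := maxabs_hat F in Hb *.
pose sg : R := if 0 <= fhat1 F i then 1 else -1.
pose Xb (x : cube n) := if 0 <= fhat1 F i then x i else ~~ x i.
pose Xf (x : cube n) := spm R (Xb x).
have XfE : forall x, Xf x = sg * spm R (x i).
  by move=> x; rewrite /Xf /Xb /sg; case: ifP => _; case: (x i); rewrite /spm /=; ring.
have sgfh : sg * fhat1 F i = beta.
  rewrite Hb /sg; case: ifP => h; first by rewrite mul1r ger0_norm.
  by rewrite ltr0_norm ?mulN1r // ltNge h.
pose g (x : cube n) := F x - a.
pose Zf (x : cube n) := Trho rho g x / rho.
pose c (x : cube n) := (f x, Xb x).
have SF : \sum_(x : cube n) F x = a * 2%:R ^+ n.
  by rewrite -Ef /Eunif -/(c0 R n) mulrAC c0K mul1r.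
have SX : \sum_(x : cube n) Xf x = 0.
  by rewrite (eq_bigr _ (fun x _ => XfE x)) -mulr_sumr sum_spm mulr0.
have SFX : \sum_(x : cube n) F x * Xf x = beta * 2%:R ^+ n.
  rewrite -sgfh.
  transitivity (sg * \sum_(x : cube n) F x * spm R (x i)).
    by rewrite mulr_sumr; apply: eq_bigr => x _; rewrite XfE; ring.
  by rewrite /fhat1 /Eunif -/(c0 R n) -mulrA mulrAC c0K mul1r.
have HP : forall sx, PSX a beta sx * 2%:R ^+ n = (cnt c sx)%:R.
  move=> [s b]; rewrite -sum_ind.
  have E : forall x, ((c x == (s, b))%:R : R) =
      (if s then 0 else 1/2) * 1 + (if s then 1/2 else -(1/2)) * F x +
      (if s then 0 else spm R b / 2) * Xf x +
      (if s then spm R b / 2 else - (spm R b / 2)) * (F x * Xf x).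
    move=> x; rewrite /c /F /boolR /Xf /b01.
    by case: (f x); case: (Xb x); case: s; case: b; rewrite /spm /=; field.
  rewrite (eq_bigr _ (fun x _ => E x)) sum_lin4 sum_one SF SX SFX; clear E.
  by case: s; case: b; rewrite /PSX /spm /=; field.
have P0 : forall sx, 0 <= PSX a beta sx.
  move=> sx; rewrite -(pmulr_lge0 _ (exprn_gt0 n (ltr0Sn R 1))) HP.
  exact: ler0n.
have b0 : 0 <= beta by rewrite Hb normr_ge0.
have ba : beta <= a by have := P0 (true, false); rewrite /PSX; lra.
have b1a : beta <= 1 - a by have := P0 (false, true); rewrite /PSX; lra.
have hat0 : hat g (s0 n) = 0.
  rewrite /hat (@Eunif_ext R n _ (fun x => F x - a)) ?EunifB ?Ef ?subrr //.
  by move=> x; rewrite chi_s0 mulr1.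
have hatei : forall j, Eunif (fun x => g x * chi (ei j) x) = fhat1 F j.
  move=> j; rewrite /fhat1 /Eunif; congr (_ * _).
  transitivity (\sum_(x : cube n) (F x * spm R (x j) - a * spm R (x j))).
    by apply: eq_bigr => x _; rewrite chi_ei /g; ring.
  by rewrite sumrB -mulr_sumr sum_spm mulr0 subr0.
have Tg : forall x, Trho rho g x = Trho rho F x - a.
  by move=> x; rewrite /g Trho_lin.
have T1 : forall x : cube n, Trho rho (fun _ => 1) x = 1.
  by move=> x; rewrite /Trho; under eq_bigr do rewrite mulr1; exact: T_one.
have rn0 : rho != 0 by exact: lt0r_neq0.
have HS : forall x, Sval a (c x) = g x.
  by move=> x; rewrite /c /Sval /g /F /boolR /b01 /=; case: (f x) => /=; ring.
have HX : forall x, Xval R (c x) = Xf x by [].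
have EJ G := @Ejoint_fin R n a beta c g Xf Zf G HP HS HX.
have Wf : Wfeas a beta f by rewrite /Wfeas Ef eqxx /beta eqxx.
apply: ereal_sup_ubound; exists beta, (zz Zf), (pp c); split; last first.
  rewrite EJ /=; congr (_%:E); apply: Eunif_ext => x.
  by rewrite /Zf Tg; congr Phi; field.
split.
- by rewrite b0 /= le_min ba b1a.
- exact: pmf_fin.
split.
- move=> sx k _; rewrite /zz /Zf Tg.
  have -> : a + rho * ((Trho rho F (xk k) - a) / rho) = Trho rho F (xk k) by field.
  apply: T_01 => //; apply/andP; split; lra.
- rewrite EJ /=.
  rewrite (@Eunif_ext R n _ (fun x => rho^-1 * ((fun _ => 1) x * Trho rho g x))); last first.
    by move=> x; rewrite /Zf mul1r mulrC.
  rewrite EunifZ Eunif_sym.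
  rewrite (@Eunif_ext R n _ (fun x => g x - 0)); last by move=> x; rewrite T1 mulr1 subr0.
  by rewrite EunifB subr0 (@Eunif_ext R n _ (fun x => F x - a)) // EunifB Ef subrr mulr0.
- rewrite EJ /=.
  rewrite (@Eunif_ext R n _ (fun x => (sg / rho) * (chi (ei i) x * Trho rho g x))); last first.
    by move=> x; rewrite /Zf XfE chi_ei; field.
  rewrite EunifZ Eunif_sym.
  rewrite (@Eunif_ext R n _ (fun x => rho * (g x * chi (ei i) x))); last first.
    by move=> x; rewrite T_chi wgt_ei; ring.
  by rewrite EunifZ hatei -sgfh; field.
- rewrite !EJ /=.
  rewrite (@Eunif_ext R n _ (fun x => (rho ^+ 2)^-1 * (Trho rho g x ^+ 2))); last first.
    by move=> x; rewrite /Zf; field.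
  rewrite (@Eunif_ext R n (fun x => g x * Zf x) (fun x => rho^-1 * (g x * Trho rho g x))); last first.
    by move=> x; rewrite /Zf; field.
  rewrite !EunifZ mulrA mulfV // mul1r mulrC.
  apply: (le_trans (@key R n rho g r01 hat0)); rewrite lerD2r; apply: ler_wpM2l.
    by rewrite subr_ge0 ltW.
  have -> : \sum_i hat g (ei i) ^+ 2 = W1 F.
    by rewrite /W1; apply: eq_bigr => j _; rewrite /hat hatei.
  apply: (le_trans _ (Hom a beta (ex_intro _ f Wf))).
  by rewrite /Wn; apply: le_bigmax_cond.
Qed.
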